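(* Let $D$ be a distributive lattice with bottom and let $e,f,i,j\in D$ with $f<e$ and $j<i$. Then $\mathcal{V}_{e;f}\subseteq\mathcal{V}_{i;j}$ if and only if $e=f\vee(e\wedge i)$ and $f\wedge j=e\wedge j$.
   Context: A prime filter of $D$ is a nonempty, upward closed subset $F$ not containing the bottom, closed under binary meets, such that $x\vee y\in F$ implies $x\in F$ or $y\in F$. For $e\in D$, $\mathcal{V}_e$ is the set of prime filters of $D$ containing $e$, and for $f\le e$, $\mathcal{V}_{e;f}=\mathcal{V}_e\setminus\mathcal{V}_f$. *)

(* Defs.v *)
From HB Require Import structures.
From mathcomp Require Import all_boot all_order.
Set Implicit Arguments. Unset Strict Implicit. Unset Printing Implicit Defensive.
Import Order.TTheory.
Local Open Scope order_scope.

Definition prime_filter (d : Order.disp_t) (D : bDistrLatticeType d)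
  (F : D -> Prop) : Prop :=
  [/\ (exists x, F x),
      (forall x y : D, x <= y -> F x -> F y),
      ~ F \bot,
      (forall x y : D, F x -> F y -> F (x `&` y)) &
      (forall x y : D, F (x `|` y) -> F x \/ F y)].

Definition V (d : Order.disp_t) (D : bDistrLatticeType d) (e : D)
  : (D -> Prop) -> Prop :=
  fun F => prime_filter F /\ F e.

Definition Vdiff (d : Order.disp_t) (D : bDistrLatticeType d) (e f : D)
  : (D -> Prop) -> Prop :=
  fun F => V e F /\ ~ V f F.

(* Main.v *)
Require Import Defs.
From mathcomp Require Import all_boot all_order.
From mathcomp Require Import boolp classical_sets.
Import Order.TTheory.
Local Open Scope order_scope.

Definition HH {d : Order.disp_t} {D : bDistrLatticeType d} (a : D) (G : D -> Prop) :=
  fun x => G x \/ a <= x.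

Definition PP {d : Order.disp_t} {D : bDistrLatticeType d} (a b : D) (G : D -> Prop) :=
  [/\ (forall x y, x <= y -> HH a G x -> HH a G y),
      (forall x y, HH a G x -> HH a G y -> HH a G (x `&` y)) &
      ~ HH a G b].

Lemma sep (d : Order.disp_t) (D : bDistrLatticeType d) (a b : D) :
  ~ (a <= b) -> exists F : D -> Prop, [/\ prime_filter F, F a & ~ F b].
Proof.
move=> nab.
have [A [PA Amax]] : exists A, PP a b A /\ forall B, (A `<` B)%classic -> ~ PP a b B.
  apply: (@Zorn_bigcup D (PP a b)) => C CP Ctot.
  set U := (\bigcup_(X in C) X)%classic.
  have lift X z : C X -> HH a X z -> HH a U z.
    move=> CX [Xz|az]; [left; exists X => // | by right].
  split.
  - move=> x y xy [[X CX Xx]|ax]; last by right; exact: le_trans xy.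
    have [upX _ _] := CP X CX.
    exact: (lift X) (upX x y xy (or_introl Xx)).
  - move=> x y [[X CX Xx]|ax] [[Y CY Yy]|ay].
    + have [XY|YX] := Ctot X Y CX CY.
      * have [_ mY _] := CP Y CY.
        by apply: (lift Y) => //; apply: mY; left => //; exact: XY.
      * have [_ mX _] := CP X CX.
        by apply: (lift X) => //; apply: mX; left => //; exact: YX.
    + have [_ mX _] := CP X CX.
      by apply: (lift X) => //; apply: mX; [left|right].
    + have [_ mY _] := CP Y CY.
      by apply: (lift Y) => //; apply: mY; [right|left].
    + by right; rewrite lexI ax ay.
  - move=> [[X CX Xb]|ab] //.
    have [_ _ nX] := CP X CX; apply: nX; by left.
have [upA mA nbA] := PA.
set G := HH a A.
have Ga : G a by right.
have Gup x : a <= x -> G x by move=> ax; right.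
have key x : ~ G x -> exists2 u, G u & u `&` x <= b.
  move=> nGx.
  set Bx := fun z => exists2 u, G u & u `&` x <= z.
  have HB z : HH a Bx z -> Bx z.
    move=> [//|az]; exists z; [exact: Gup | exact: leIl].
  have ABx : (A `<` Bx)%classic.
    split.
      by move=> z Az; exists z; [left | exact: leIl].
    move=> BxA; apply: nGx; left; apply: BxA; exists a => //; exact: leIr.
  have : ~ PP a b Bx := Amax Bx ABx.
  case: (pselect (Bx b)) => // Bxb nP; exfalso; apply: nP; split.
  - move=> y z yz /HB [u Gu uy]; left; exists u => //; exact: le_trans yz.
  - move=> y z /HB [u Gu uy] /HB [v Gv vz]; left; exists (u `&` v).
      exact: mA.
    rewrite lexI; apply/andP; split.
      apply: le_trans uy; apply: leI2 => //; exact: leIl.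
    apply: le_trans vz; apply: leI2 => //; exact: leIr.
  - by move/HB.
exists G; split => //.
- split.
  + by exists a.
  + exact: upA.
  + move=> G0; apply: nbA; apply: upA G0; exact: le0x.
  + exact: mA.
  + move=> x y Gxy; case: (pselect (G x)) => [|nGx]; first by left.
    case: (pselect (G y)) => [|nGy]; first by right.
    exfalso; have [u Gu ux] := key x nGx; have [v Gv vy] := key y nGy.
    set w := (u `&` v) `&` (x `|` y).
    have Gw : G w by apply: (mA) => //; exact: (mA).
    apply: nbA; move: Gw; apply: (upA w).
    rewrite /w meetUr leUx; apply/andP; split.
      apply: le_trans ux; apply: leI2 => //; exact: leIl.
    apply: le_trans vy; apply: leI2 => //; exact: leIr.
Qed.

Theorem lemma2p8 (d : Order.disp_t) (D : bDistrLatticeType d) (e f i j : D) :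
  f < e -> j < i ->
  ((forall F : D -> Prop, Vdiff e f F -> Vdiff i j F) <->
   (e = f `|` (e `&` i) /\ f `&` j = e `&` j)).
Proof.
move=> fe ji; have fe' := ltW fe; split.
- move=> H; split.
  + have efi : e <= f `|` i.
      case: (pselect (e <= f `|` i)) => // nle; exfalso.
      have [F [pF Fe nF]] := @sep _ _ _ _ nle.
      have [_ up _ _ _] := pF.
      have [[_ Fi] _] : Vdiff i j F.
        apply: H; split; first by [].
        by move=> [_ Ff]; apply: nF; apply: (up) Ff; exact: leUl.
      by apply: nF; apply: (up) Fi; exact: leUr.
    apply/eqP; rewrite eq_le leUx fe' leIl /= joinIr lexI efi andbT leUr.
    by [].
  + have ejf : e `&` j <= f.
      case: (pselect (e `&` j <= f)) => // nle; exfalso.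
      have [F [pF Fej nF]] := @sep _ _ _ _ nle.
      have [_ up _ _ _] := pF.
      have [_ nVj] : Vdiff i j F.
        apply: H; split; first by split => //; apply: (up) Fej; exact: leIl.
        by move=> [_ Ff]; apply: nF.
      by apply: nVj; split => //; apply: (up) Fej; exact: leIr.
    by apply/eqP; rewrite eq_le leI2 //= lexI ejf leIr.
- move=> [Ee Ej] F [[pF Fe] nVf].
  have [_ up _ mc pr] := pF.
  split.
    split => //.
    have : F (f `|` (e `&` i)) by rewrite -Ee.
    move/pr => [Ff|Fei]; first by exfalso; apply: nVf.
    by apply: (up) Fei; exact: leIr.
  move=> [_ Fj]; apply: nVf; split => //.
  have : F (e `&` j) by exact: mc.
  rewrite -Ej => Ffj; apply: (up) Ffj; exact: leIl.
Qed.
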